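(* Let $d\ge2$ be an integer, $B>1$ and $0<s<1$. Then $$\sup_{1\le\alpha_1\le\cdots\le\alpha_{d-1}\le B}\min\Big\{\alpha_1^{-s},\ \big(\alpha_1^{1-s}\alpha_2^{-s}\big)^{1/2},\ \dots,\ \big(\alpha_{k-1}^{1-s}\alpha_k^{-s}\big)^{1/k},\ \dots,\ \big(\alpha_{d-1}^{1-s}B^{-s}\big)^{1/d}\Big\}=B^{-g_d(s)},$$ where the terms in the minimum are $\alpha_1^{-s}$, the terms $(\alpha_{k-1}^{1-s}\alpha_k^{-s})^{1/k}$ for $2\le k\le d-1$, and $(\alpha_{d-1}^{1-s}B^{-s})^{1/d}$; moreover the supremum is attained at the point where all the terms in the minimum are equal.
   Context: Functions $g_n:[0,1]\to\mathbb R$: $g_1(s)=s$, $g_n(s)=\frac{s\,g_{n-1}(s)}{1-s+n\,g_{n-1}(s)}$ for $n\ge2$. *)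

(* Defs.v *)
From Stdlib Require Import Reals List Lra Lia.
Open Scope R_scope.

(* g_1(s) = s, g_n(s) = s g_{n-1}(s) / (1 - s + n g_{n-1}(s)) for n >= 2.
   (g_0 is a junk value, never used.) *)
Fixpoint g (n : nat) (s : R) : R :=
  match n with
  | O => s
  | S m =>
      match m with
      | O => s
      | S _ => s * g m s / (1 - s + INR n * g m s)
      end
  end.

(* Feasible points: alpha_1, ..., alpha_{d-1} (indices 1..d-1 of alpha : nat -> R)
   with 1 <= alpha_1 <= ... <= alpha_{d-1} <= B. *)
Definition feasible (d : nat) (B : R) (alpha : nat -> R) : Prop :=
  1 <= alpha 1%nat /\
  (forall k : nat, (1 <= k)%nat -> (k < d - 1)%nat -> alpha k <= alpha (S k)) /\
  alpha (d - 1)%nat <= B.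

Definition ext (d : nat) (B : R) (alpha : nat -> R) (k : nat) : R :=
  if Nat.eqb k d then B else alpha k.

Definition term (d : nat) (B s : R) (alpha : nat -> R) (k : nat) : R :=
  match k with
  | O => 0
  | S O => Rpower (ext d B alpha 1%nat) (- s)
  | S j => Rpower (Rpower (ext d B alpha j) (1 - s) * Rpower (ext d B alpha k) (- s))
                  (1 / INR k)
  end.

Definition minTerms (d : nat) (B s : R) (alpha : nat -> R) : R :=
  fold_right Rmin (term d B s alpha 1%nat)
             (map (term d B s alpha) (seq 2 (d - 1))).

(* Main.v *)
Require Import Defs.
From Stdlib Require Import Reals List Lra Lia.
Open Scope R_scope.

Fixpoint h (s : R) (n : nat) : R :=
  match n with
  | O => 0
  | S m => ((1 - s) * h s m + INR (S m)) / s
  end.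

Lemma exp_le_mono : forall x y, x <= y -> exp x <= exp y.
Proof. intros x y H; destruct (Rle_lt_or_eq_dec _ _ H) as [H1|H1].
  left; now apply exp_increasing. subst; lra. Qed.

Lemma exp_le_inv' : forall x y, exp x <= exp y -> x <= y.
Proof. intros x y H; destruct (Rle_or_lt x y) as [|H1]; auto.
  apply exp_increasing in H1; lra. Qed.

Lemma hS (s : R) (n : nat) : 0 < s -> s * h s (S n) = (1 - s) * h s n + INR (S n).
Proof. intros Hs; change (h s (S n)) with (((1 - s) * h s n + INR (S n)) / s); field; lra. Qed.

Lemma h_nonneg (s : R) n : 0 < s < 1 -> 0 <= h s n.
Proof. intros Hs; induction n. simpl; lra.
  assert (E := hS s n ltac:(lra)). pose proof (pos_INR (S n)).
  assert (0 <= (1-s) * h s n) by (apply Rmult_le_pos; lra).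
  assert (0 < s * h s (S n)). { rewrite E. rewrite S_INR in *. pose proof (pos_INR n). lra. }
  nra. Qed.

Lemma h_pos (s : R) n : 0 < s < 1 -> (1 <= n)%nat -> 0 < h s n.
Proof. intros Hs Hn; destruct n; [lia|].
  assert (E := hS s n ltac:(lra)). pose proof (h_nonneg s n Hs).
  assert (0 <= (1-s) * h s n) by (apply Rmult_le_pos; lra).
  assert (0 < s * h s (S n)). { rewrite E. rewrite S_INR in *. pose proof (pos_INR n). lra. }
  nra. Qed.

Lemma h_bound (s : R) n : 0 < s < 1 -> (2*s-1) * h s n <= INR n.
Proof. intros Hs; induction n. simpl; lra.
  assert (E := hS s n ltac:(lra)). rewrite S_INR in *.
  assert (s * ((2*s-1) * h s (S n)) <= s * (INR n + 1)).
  { replace (s * ((2*s-1) * h s (S n))) with ((2*s-1) * (s * h s (S n))) by ring.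
    rewrite E. assert ((1-s)*((2*s-1) * h s n) <= (1-s) * INR n) by (apply Rmult_le_compat_l; lra).
    nra. }
  apply Rmult_le_reg_l with s; lra. Qed.

Lemma h_mono1 (s : R) n : 0 < s < 1 -> h s n <= h s (S n).
Proof. intros Hs. assert (E := hS s n ltac:(lra)). pose proof (h_bound s n Hs).
  rewrite S_INR in E. apply Rmult_le_reg_l with s; lra. Qed.

Lemma h_mono (s : R) i j : 0 < s < 1 -> (i <= j)%nat -> h s i <= h s j.
Proof. intros Hs Hij; induction Hij. lra. pose proof (h_mono1 s m Hs); lra. Qed.

Lemma g_SS n s : g (S (S n)) s = s * g (S n) s / (1 - s + INR (S (S n)) * g (S n) s).
Proof. reflexivity. Qed.

Lemma g_h (s : R) n : 0 < s < 1 -> g (S n) s = / h s (S n).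
Proof. intros Hs; induction n.
  simpl. field. lra.
  rewrite g_SS, IHn. pose proof (h_pos s (S n) Hs ltac:(lia)).
  assert (E := hS s (S n) ltac:(lra)).
  assert (h s (S (S n)) = ((1 - s) * h s (S n) + INR (S (S n))) / s) by reflexivity.
  rewrite H0. pose proof (pos_INR (S (S n))).
  assert (0 <= (1-s) * h s (S n)) by (apply Rmult_le_pos; lra).
  assert (0 < INR (S (S n))) by (apply lt_0_INR; lia).
  field; repeat split; try lra. Qed.

Lemma ind_le (s m : R) (X : nat -> R) n : 0 < s < 1 -> X 0%nat = 0 ->
  (forall k, (k < n)%nat -> m * INR (S k) <= (1-s) * X k - s * X (S k)) ->
  X n <= - m * h s n.
Proof. intros Hs H0 H. induction n. simpl; lra.
  assert (IH : X n <= - m * h s n) by (apply IHn; intros; apply H; lia).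
  specialize (H n ltac:(lia)). assert (E := hS s n ltac:(lra)).
  assert ((1-s) * X n <= (1-s) * (- m * h s n)) by (apply Rmult_le_compat_l; lra).
  assert (s * X (S n) <= s * (- m * h s (S n))) by nra.
  apply Rmult_le_reg_l with s; lra. Qed.

Lemma ind_ge (s m : R) (X : nat -> R) n : 0 < s < 1 -> X 0%nat = 0 ->
  (forall k, (k < n)%nat -> m * INR (S k) >= (1-s) * X k - s * X (S k)) ->
  X n >= - m * h s n.
Proof. intros Hs H0 H. induction n. simpl; lra.
  assert (IH : X n >= - m * h s n) by (apply IHn; intros; apply H; lia).
  specialize (H n ltac:(lia)). assert (E := hS s n ltac:(lra)).
  assert ((1-s) * X n >= (1-s) * (- m * h s n)) by (apply Rle_ge, Rmult_le_compat_l; lra).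
  assert (s * X (S n) >= s * (- m * h s (S n))) by nra.
  apply Rle_ge, Rmult_le_reg_l with s; lra. Qed.

Definition X (d : nat) (B : R) (alpha : nat -> R) (j : nat) : R :=
  match j with O => 0 | _ => ln (ext d B alpha j) end.

Lemma term_exp d B s alpha j :
  term d B s alpha (S j) = exp (((1-s) * X d B alpha j - s * X d B alpha (S j)) / INR (S j)).
Proof.
  destruct j as [|j].
  - unfold term, Rpower, X. change (INR 1) with 1. f_equal; field.
  - unfold term, Rpower, X. rewrite <- exp_plus, ln_exp. f_equal. field.
    apply not_0_INR; lia.
Qed.

Lemma fold_min_le : forall l a, fold_right Rmin a l <= a /\ forall y, In y l -> fold_right Rmin a l <= y.
Proof. induction l as [|b l IH]; intros a; simpl.
  split; [lra| tauto].
  destruct (IH a) as [H1 H2]. split.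
  pose proof (Rmin_r b (fold_right Rmin a l)); lra.
  intros y [->|Hy]. apply Rmin_l.
  pose proof (Rmin_r b (fold_right Rmin a l)); specialize (H2 y Hy); lra. Qed.

Lemma fold_min_in : forall l a, fold_right Rmin a l = a \/ In (fold_right Rmin a l) l.
Proof. induction l as [|b l IH]; intros a; simpl. auto.
  destruct (Rle_dec b (fold_right Rmin a l)).
  rewrite Rmin_left by auto. right; left; auto.
  rewrite Rmin_right by lra.
  destruct (IH a) as [H|H]; [left; auto| right; right; auto]. Qed.

Lemma min_le_term d B s alpha k : (1 <= k <= d)%nat -> minTerms d B s alpha <= term d B s alpha k.
Proof. intros Hk. unfold minTerms. destruct (fold_min_le (map (term d B s alpha) (seq 2 (d - 1))) (term d B s alpha 1%nat)) as [H1 H2].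
  destruct (Nat.eq_dec k 1) as [->|Hne]. auto.
  apply H2. apply in_map. apply in_seq. lia. Qed.


Lemma min_is_term' d B s alpha : exists k, (1 <= k)%nat /\ (k <= d \/ k = 1)%nat /\ minTerms d B s alpha = term d B s alpha k.
Proof. unfold minTerms.
  destruct (fold_min_in (map (term d B s alpha) (seq 2 (d - 1))) (term d B s alpha 1%nat)) as [H|H].
  exists 1%nat; split; [lia| split; [right; reflexivity| auto]].
  apply in_map_iff in H. destruct H as [k [Hk Hin]]. apply in_seq in Hin.
  exists k; split; [lia|split;[left; lia| auto]]. Qed.

Theorem proposition2p8 (d : nat) (B s : R) :
  (2 <= d)%nat -> 1 < B -> 0 < s < 1 ->
  (* the supremum over feasible points of the minimum equals B^{-g_d(s)} *)
  is_lub (fun y => exists alpha, feasible d B alpha /\ y = minTerms d B s alpha)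
         (Rpower B (- g d s)) /\
  (* it is attained at the point where all the terms are equal: such a point
     exists, and at every such point the minimum equals the supremum *)
  (exists alpha, feasible d B alpha /\
     (forall k j : nat, (1 <= k <= d)%nat -> (1 <= j <= d)%nat ->
        term d B s alpha k = term d B s alpha j)) /\
  (forall alpha, feasible d B alpha ->
     (forall k j : nat, (1 <= k <= d)%nat -> (1 <= j <= d)%nat ->
        term d B s alpha k = term d B s alpha j) ->
     minTerms d B s alpha = Rpower B (- g d s)).
Proof.
  intros Hd HB Hs.
  assert (HL : 0 < ln B) by (rewrite <- ln_1; apply ln_increasing; lra).
  destruct d as [|d']; [lia|].
  assert (Hg : g (S d') s = / h s (S d')) by (apply g_h; auto).
  assert (Hhd : 0 < h s (S d')) by (apply h_pos; auto; lia).
  assert (XD : forall alpha, X (S d') B alpha (S d') = ln B).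
  { intros alpha; unfold X, ext. rewrite Nat.eqb_refl. reflexivity. }
  set (V := Rpower B (- g (S d') s)).
  assert (HV : V = exp (- (ln B / h s (S d')))).
  { unfold V, Rpower. rewrite Hg. f_equal. field. lra. }
  assert (UB : forall alpha, minTerms (S d') B s alpha <= V).
  { intros alpha.
    destruct (min_is_term' (S d') B s alpha) as [k0 [Hk0 [_ Hm]]].
    destruct k0 as [|k0]; [lia|]. rewrite term_exp in Hm.
    set (m := ((1 - s) * X (S d') B alpha k0 - s * X (S d') B alpha (S k0)) / INR (S k0)) in Hm.
    assert (Hle : forall k, (k < S d')%nat -> m * INR (S k) <= (1-s) * X (S d') B alpha k - s * X (S d') B alpha (S k)).
    { intros k Hk. pose proof (min_le_term (S d') B s alpha (S k) ltac:(lia)) as H.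
      rewrite Hm, term_exp in H. apply exp_le_inv' in H.
      assert (0 < INR (S k)) by (apply lt_0_INR; lia).
      apply Rmult_le_compat_r with (r := INR (S k)) in H; [|lra].
      replace (((1 - s) * X (S d') B alpha k - s * X (S d') B alpha (S k)) / INR (S k) * INR (S k))
        with ((1 - s) * X (S d') B alpha k - s * X (S d') B alpha (S k)) in H by (field; lra).
      lra. }
    pose proof (ind_le s m (X (S d') B alpha) (S d') Hs eq_refl Hle) as H.
    rewrite XD in H. rewrite Hm, HV. apply exp_le_mono.
    assert (ln B / h s (S d') <= - m).
    { apply Rmult_le_reg_r with (h s (S d')); auto.
      replace (ln B / h s (S d') * h s (S d')) with (ln B) by (field; lra). lra. }
    lra. }
  assert (EQ : forall alpha, (forall k j : nat, (1 <= k <= S d')%nat -> (1 <= j <= S d')%nat ->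
        term (S d') B s alpha k = term (S d') B s alpha j) -> minTerms (S d') B s alpha = V).
  { intros alpha Heq.
    destruct (min_is_term' (S d') B s alpha) as [k0 [Hk0 [Hk0' Hm]]].
    rewrite Hm. rewrite (Heq k0 1%nat ltac:(lia) ltac:(lia)).
    rewrite term_exp.
    set (m := ((1 - s) * X (S d') B alpha 0 - s * X (S d') B alpha 1) / INR 1).
    assert (Hk : forall k, (k < S d')%nat -> ((1-s) * X (S d') B alpha k - s * X (S d') B alpha (S k)) = m * INR (S k)).
    { intros k Hk. pose proof (Heq (S k) 1%nat ltac:(lia) ltac:(lia)) as H.
      rewrite !term_exp in H. apply exp_inv in H. fold m in H.
      assert (0 < INR (S k)) by (apply lt_0_INR; lia).
      rewrite <- H. field. lra. }
    pose proof (ind_le s m (X (S d') B alpha) (S d') Hs eq_refl ltac:(intros k Hk'; rewrite (Hk k Hk'); lra)) as H1.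
    pose proof (ind_ge s m (X (S d') B alpha) (S d') Hs eq_refl ltac:(intros k Hk'; rewrite (Hk k Hk'); lra)) as H2.
    rewrite XD in H1, H2. rewrite HV. f_equal.
    assert (ln B = - m * h s (S d')) by lra. rewrite H. field. lra. }
  set (a := fun k => exp (ln B * h s k / h s (S d'))).
  assert (Xa : forall k, (k <= S d')%nat -> X (S d') B a k = ln B * h s k / h s (S d')).
  { intros k Hk. destruct k as [|k]. unfold X. change (h s 0) with 0. field; lra.
    unfold X, ext. destruct (Nat.eqb_spec (S k) (S d')) as [E|E].
    rewrite E. field; lra. unfold a. apply ln_exp. }
  assert (Fa : feasible (S d') B a).
  { split; [|split].
    - unfold a. rewrite <- exp_0. apply exp_le_mono.
      pose proof (h_pos s 1 Hs ltac:(lia)).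
      apply Rmult_le_pos; [apply Rmult_le_pos|]; try lra. left; apply Rinv_0_lt_compat; lra.
    - intros k _ _. unfold a. apply exp_le_mono.
      unfold Rdiv. apply Rmult_le_compat_r. left; apply Rinv_0_lt_compat; lra.
      apply Rmult_le_compat_l. lra. apply h_mono1; auto.
    - unfold a. rewrite <- (exp_ln B) at 2 by lra. apply exp_le_mono.
      pose proof (h_mono s (S d' - 1) (S d') Hs ltac:(lia)).
      apply Rmult_le_reg_r with (h s (S d')); auto.
      replace (ln B * h s (S d' - 1) / h s (S d') * h s (S d')) with (ln B * h s (S d' - 1)) by (field; lra).
      nra. }
  assert (Ta : forall k, (1 <= k <= S d')%nat -> term (S d') B s a k = exp (- (ln B / h s (S d')))).
  { intros k Hk. destruct k as [|k]; [lia|]. rewrite term_exp.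
    rewrite !Xa by lia. f_equal.
    assert (E := hS s k ltac:(lra)).
    assert (0 < INR (S k)) by (apply lt_0_INR; lia).
    replace ((1 - s) * (ln B * h s k / h s (S d')) - s * (ln B * h s (S k) / h s (S d')))
      with (ln B / h s (S d') * ((1 - s) * h s k - s * h s (S k))) by (field; lra).
    rewrite E. field. lra. }
  assert (Ea : forall k j : nat, (1 <= k <= S d')%nat -> (1 <= j <= S d')%nat ->
        term (S d') B s a k = term (S d') B s a j).
  { intros k j Hk Hj. rewrite Ta, Ta; auto. }
  split; [|split].
  - split.
    + intros y [alpha [_ ->]]. apply UB.
    + intros b Hb. apply Hb. exists a. split; auto. symmetry; apply EQ; auto.
  - exists a; split; auto.
  - intros alpha _ Heq. apply EQ; auto.
Qed.
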